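(* Let $n\ge1$, $0\le k\le n$, $D^\star\in(0,1)$, $\varepsilon\in(0,D^\star)$ and $\rho=\varepsilon(D^\star-\varepsilon)/(2n)$. Consider the set $\mathcal F_k$ of $\lambda\in\mathcal L_n$ such that, with $t=t_{\mathrm{wf}}(\lambda,D^\star)$, we have $\lambda_i\ge t+\rho$ for all $i\le k$ and $0\le\lambda_i\le t-\rho$ for all $i>k$. Then every maximizer $\lambda^\star$ of $G(\lambda)=\mathbf R_{\mathrm{rc}}(\lambda,D^\star)-\mathbf R_{\mathrm{wf}}(\lambda,D^\star)$ over $\mathcal F_k$ satisfies $\lambda^\star_{k+1}=\lambda^\star_{k+2}=\dots=\lambda^\star_n$.
   Context: Logarithms are base 2. $\mathcal L_n=\{\lambda\in\mathbb R^n_{\ge0}:\sum_i\lambda_i=n\}$. For $\lambda\in\mathcal L_n$ and $T,t>0$: $D_{\mathrm{rc}}(\lambda,T)=\frac1n\sum_i\frac{\lambda_i}{1+\lambda_iT}$, $R_{\mathrm{rc}}(\lambda,T)=\frac1{2n}\sum_i\log(1+\lambda_iT)$, $D_{\mathrm{wf}}(\lambda,t)=\frac1n\sum_i\min\{\lambda_i,t\}$, $R_{\mathrm{wf}}(\lambda,t)=\frac1{2n}\sum_i\max\{0,\log(\lambda_i/t)\}$. For $D\in(0,1)$, $T_{\mathrm{rc}}(\lambda,D)$ is the unique $T>0$ with $D_{\mathrm{rc}}(\lambda,T)=D$, and $t_{\mathrm{wf}}(\lambda,D)$ is the unique $t\in(0,\max_i\lambda_i)$ with $D_{\mathrm{wf}}(\lambda,t)=D$.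 Set $\mathbf R_{\mathrm{rc}}(\lambda,D)=R_{\mathrm{rc}}(\lambda,T_{\mathrm{rc}}(\lambda,D))$ and $\mathbf R_{\mathrm{wf}}(\lambda,D)=R_{\mathrm{wf}}(\lambda,t_{\mathrm{wf}}(\lambda,D))$. *)

(* Defs.v *)
From HB Require Import structures.
From mathcomp Require Import all_boot all_order all_algebra.
From mathcomp Require Import all_classical all_reals.
From mathcomp Require Import exp.
Set Implicit Arguments. Unset Strict Implicit. Unset Printing Implicit Defensive.
Import Order.TTheory GRing.Theory Num.Theory.
Local Open Scope ring_scope.

Section Defs.
Variable R : realType.

Definition log2 (x : R) : R := ln x / ln 2.

Definition in_Ln (n : nat) (lam : 'I_n -> R) : Prop :=
  (forall i, 0 <= lam i) /\ \sum_(i < n) lam i = n%:R.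

Definition D_rc n (lam : 'I_n -> R) (T : R) : R :=
  n%:R^-1 * \sum_(i < n) lam i / (1 + lam i * T).
Definition R_rc n (lam : 'I_n -> R) (T : R) : R :=
  (2 * n%:R)^-1 * \sum_(i < n) log2 (1 + lam i * T).
Definition D_wf n (lam : 'I_n -> R) (t : R) : R :=
  n%:R^-1 * \sum_(i < n) Num.min (lam i) t.
Definition R_wf n (lam : 'I_n -> R) (t : R) : R :=
  (2 * n%:R)^-1 * \sum_(i < n) Num.max 0 (log2 (lam i / t)).

Definition maxlam n (lam : 'I_n -> R) : R := \big[Num.max/0]_(i < n) lam i.

Definition T_rc n (lam : 'I_n -> R) (D : R) : R :=
  xget 0 [set T | 0 < T /\ D_rc lam T = D].
Definition t_wf n (lam : 'I_n -> R) (D : R) : R :=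
  xget 0 [set t | 0 < t /\ t < maxlam lam /\ D_wf lam t = D].

Definition bR_rc n (lam : 'I_n -> R) (D : R) : R := R_rc lam (T_rc lam D).
Definition bR_wf n (lam : 'I_n -> R) (D : R) : R := R_wf lam (t_wf lam D).

Definition Gfun n (lam : 'I_n -> R) (D : R) : R := bR_rc lam D - bR_wf lam D.

(* F_k (0-based: indices i < k correspond to paper's i <= k) *)
Definition in_Fk (n k : nat) (D rho : R) (lam : 'I_n -> R) : Prop :=
  in_Ln lam /\
  (forall i : 'I_n, (i < k)%N -> t_wf lam D + rho <= lam i) /\
  (forall i : 'I_n, (k <= i)%N -> 0 <= lam i /\ lam i <= t_wf lam D - rho).

End Defs.

(* Main.v *)
Require Import Defs.
From HB Require Import structures.
From mathcomp Require Import all_boot all_order all_algebra.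
From mathcomp Require Import all_classical all_reals.
From mathcomp Require Import all_analysis.
From mathcomp Require Import ring lra.
Import Order.TTheory GRing.Theory Num.Theory.
Import numFieldNormedType.Exports.
Local Open Scope ring_scope.

Section Helpers.
Variable R : realType.

Lemma tang_g (T x mu : R) : 0 <= T -> 0 <= x -> 0 <= mu ->
  x / (1 + x * T) <= mu / (1 + mu * T) + (x - mu) / (1 + mu * T) ^+ 2.
Proof.
move=> T0 x0 m0.
have a0 : 0 < 1 + x * T by rewrite ltr_wpDr // mulr_ge0.
have b0 : 0 < 1 + mu * T by rewrite ltr_wpDr // mulr_ge0.
rewrite -subr_ge0.
have -> : mu / (1 + mu * T) + (x - mu) / (1 + mu * T) ^+ 2 - x / (1 + x * T)
   = T * (x - mu) ^+ 2 / ((1 + x * T) * (1 + mu * T) ^+ 2).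
  by field; rewrite ?gt_eqF //.
apply: divr_ge0; first by rewrite mulr_ge0 // sqr_ge0.
by rewrite mulr_ge0 ?exprn_ge0 ?ltW.
Qed.

Lemma tang_g_lt (T x mu : R) : 0 < T -> 0 <= x -> 0 <= mu -> x != mu ->
  x / (1 + x * T) < mu / (1 + mu * T) + (x - mu) / (1 + mu * T) ^+ 2.
Proof.
move=> T0 x0 m0 xm.
have a0 : 0 < 1 + x * T by rewrite ltr_wpDr // mulr_ge0 // ltW.
have b0 : 0 < 1 + mu * T by rewrite ltr_wpDr // mulr_ge0 // ltW.
rewrite -subr_gt0.
have -> : mu / (1 + mu * T) + (x - mu) / (1 + mu * T) ^+ 2 - x / (1 + x * T)
   = T * (x - mu) ^+ 2 / ((1 + x * T) * (1 + mu * T) ^+ 2).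
  by field; rewrite ?gt_eqF //.
apply: divr_gt0; last by rewrite mulr_gt0 ?exprn_gt0.
by rewrite mulr_gt0 // exprn_even_gt0 // subr_eq0.
Qed.

Lemma ln2_gt0 : 0 < ln (2 : R).
Proof. by apply: ln_gt0; rewrite ltr1n. Qed.

Lemma tang_log2 (y z : R) : 0 < y -> 0 < z -> log2 y <= log2 z + (y - z) / z / ln 2.
Proof.
move=> y0 z0; rewrite /log2 -mulrDl ler_pM2r ?invr_gt0 ?ln2_gt0 //.
rewrite -lerBlDl -ln_div ?posrE //.
have -> : y / z = 1 + (y - z) / z by field; rewrite gt_eqF.
apply: le_ln1Dx.
rewrite -(ltrD2l 1) addrN /= -[X in _ < X](_ : y / z = _); first by rewrite divr_gt0.
by field; rewrite gt_eqF.
Qed.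

Lemma sum_lt n (F G : 'I_n -> R) (i0 : 'I_n) :
  (forall i, F i <= G i) -> F i0 < G i0 -> \sum_i F i < \sum_i G i.
Proof.
move=> le lt; rewrite (bigD1 i0) //= [X in _ < X](bigD1 i0) //=.
by apply: ltr_leD => //; apply: ler_sum.
Qed.
Arguments sum_lt {n F G}.


Local Open Scope classical_set_scope.

Lemma cont_sum (I : Type) (r : seq I) (h : I -> R -> R) (x : R) :
  (forall i, h i y @[y --> x] --> h i x) ->
  \sum_(i <- r) h i y @[y --> x] --> \sum_(i <- r) h i x.
Proof.
move=> hc; elim: r => [|a r IH].
  rewrite big_nil; under eq_fun do rewrite big_nil; exact: cvg_cst.
rewrite big_cons; under eq_fun do rewrite big_cons.
exact: cvgD.
Qed.

Lemma Drc_cont n (lam : 'I_n -> R) (x : R) : (forall i, 0 <= lam i) -> 0 <= x ->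
  {for x, continuous (fun T => D_rc lam T)}.
Proof.
move=> l0 x0; rewrite /D_rc.
apply: cvgM; first exact: cvg_cst.
apply: cont_sum => i.
apply: cvgM; first exact: cvg_cst.
apply: cvgV; first by rewrite gt_eqF // ltr_wpDr // mulr_ge0.
apply: cvgD; first exact: cvg_cst.
apply: cvgM; first exact: cvg_cst.
exact: cvg_id.
Qed.


Lemma Drc0 n (lam : 'I_n -> R) : (1 <= n)%N -> in_Ln lam -> D_rc lam 0 = 1.
Proof.
move=> n1 [l0 ls]; rewrite /D_rc.
under eq_bigr do rewrite mulr0 addr0 divr1.
by rewrite ls mulVf // pnatr_eq0 -lt0n.
Qed.

Lemma Drc_le n (lam : 'I_n -> R) T : (1 <= n)%N -> in_Ln lam -> 0 < T -> D_rc lam T <= T^-1.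
Proof.
move=> n1 [l0 ls] T0; rewrite /D_rc.
have n0 : 0 < n%:R :> R by rewrite ltr0n.
rewrite ler_pdivrMl //.
apply: le_trans (_ : \sum_(i < n) T^-1 <= _).
  apply: ler_sum => i _.
  have a0 : 0 < 1 + lam i * T by rewrite ltr_wpDr // mulr_ge0 // ltW.
  rewrite ler_pdivrMr // mulrDr mulr1 mulrCA mulVf ?gt_eqF // mulr1.
  by rewrite lerDr invr_ge0 ltW.
by rewrite sumr_const card_ord mulr_natl.
Qed.

Lemma Trc_spec n (lam : 'I_n -> R) D : (1 <= n)%N -> in_Ln lam -> 0 < D -> D < 1 ->
  0 < T_rc lam D /\ D_rc lam (T_rc lam D) = D.
Proof.
move=> n1 hl D0 D1; rewrite /T_rc.
apply: (xgetPex 0 (P := [set T | 0 < T /\ D_rc lam T = D])).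
have b0 : 0 <= 2 / D by rewrite divr_ge0 // ltW.
have hc : {within `[0, 2 / D], continuous (fun T => D_rc lam T)}.
  apply: continuous_in_subspaceT => x; rewrite inE /= in_itv /= => /andP[x0 _].
  by apply: Drc_cont => //; case: hl.
have hv : Num.min (D_rc lam 0) (D_rc lam (2 / D)) <= D <= Num.max (D_rc lam 0) (D_rc lam (2 / D)).
  rewrite Drc0 //.
  have hb : D_rc lam (2 / D) <= D / 2.
    apply: le_trans (@Drc_le _ lam (2 / D) n1 hl _) _; first by rewrite divr_gt0.
    by rewrite invf_div.
  rewrite ge_min le_max (ltW D1) /=.
  rewrite andbT.
  apply/orP; right; apply: le_trans hb _.
  by rewrite ler_pdivrMr // ler_peMr // ?ler1n // ltW.
have [c c_in fc] := IVT b0 hc hv.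
exists c; split => //.
  move: c_in; rewrite in_itv /= => /andP[c0 _].
  rewrite lt_neqAle c0 andbT; apply/eqP => c0'.
  by move: fc; rewrite -c0' Drc0 // => D1'; rewrite -D1' ltxx in D1.
Qed.


Lemma min_mono (a t1 t2 : R) : t1 <= t2 -> Num.min a t1 <= Num.min a t2.
Proof.
move=> h; rewrite le_min !ge_min lexx /= h.
by rewrite orbT.
Qed.

Lemma Dwf_strict n (lam : 'I_n -> R) t1 t2 : (1 <= n)%N -> 0 < t1 -> t1 < t2 ->
  t2 < maxlam lam -> D_wf lam t1 < D_wf lam t2.
Proof.
move=> n1 t10 t12 t2m.
have [l hl] : exists l, t2 < lam l.
  case: (pselect (exists l, t2 < lam l)) => // nex; exfalso.
  have : maxlam lam <= t2.
    apply: bigmax_le; first by rewrite ltW // (lt_trans t10).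
    move=> l _; rewrite leNgt; apply/negP => h; apply: nex; by exists l.
  by rewrite leNgt t2m.
rewrite /D_wf ltr_pM2l ?invr_gt0 ?ltr0n //.
apply: (sum_lt l) => [i|]; first by apply: min_mono; rewrite ltW.
rewrite min_r ?min_r ?ltW //; exact: lt_trans hl.
Qed.

Lemma maxlog0 (x t : R) : 0 < t -> x <= t -> Num.max 0 (log2 (x / t)) = 0.
Proof.
move=> t0 xt; apply: max_l; rewrite /log2.
apply: mulr_le0_ge0; last by rewrite invr_ge0 ltW // ln2_gt0.
by apply: ln_le0; rewrite ler_pdivrMr // mul1r.
Qed.

Lemma tang_log2' (x mu T : R) : 0 <= T -> 0 <= x -> 0 <= mu ->
  log2 (1 + x * T) <= log2 (1 + mu * T) + (x - mu) * (T / (1 + mu * T) / ln 2).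
Proof.
move=> T0 x0 m0.
have a0 : 0 < 1 + x * T by rewrite ltr_wpDr // mulr_ge0.
have b0 : 0 < 1 + mu * T by rewrite ltr_wpDr // mulr_ge0.
have E : (1 + x * T - (1 + mu * T)) / (1 + mu * T) / ln 2 = (x - mu) * (T / (1 + mu * T) / ln 2).
  by field; rewrite !gt_eqF // ln2_gt0.
by rewrite -E; apply: tang_log2.
Qed.

Lemma log2_le (a b : R) : 0 < a -> a <= b -> log2 a <= log2 b.
Proof.
move=> a0 ab; rewrite /log2 ler_pM2r ?invr_gt0 ?ln2_gt0 //.
by rewrite ler_ln ?posrE // (lt_le_trans a0).
Qed.

Lemma log2_lt (a b : R) : 0 < a -> a < b -> log2 a < log2 b.
Proof.
move=> a0 ab; rewrite /log2 ltr_pM2r ?invr_gt0 ?ln2_gt0 //.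
by rewrite ltr_ln ?posrE // (lt_trans a0).
Qed.

End Helpers.
Arguments sum_lt {R n F G}.

Theorem claimD2 (R : realType) (n k : nat) (Dstar eps : R) (lamstar : 'I_n -> R) :
  (1 <= n)%N -> (k <= n)%N ->
  0 < Dstar -> Dstar < 1 ->
  0 < eps -> eps < Dstar ->
  let rho := eps * (Dstar - eps) / (2 * n%:R) in
  in_Fk k Dstar rho lamstar ->
  (forall lam : 'I_n -> R, in_Fk k Dstar rho lam -> Gfun lam Dstar <= Gfun lamstar Dstar) ->
  forall i j : 'I_n, (k <= i)%N -> (k <= j)%N -> lamstar i = lamstar j.
Proof.
move=> n1 kn D0 D1 e0 eD rho [[l0 lsum] [hh ht]] hmax i j ki kj.
case: (eqVneq (lamstar i) (lamstar j)) => // nij; exfalso.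
have n0 : 0 < n%:R :> R by rewrite ltr0n.
have rho0 : 0 < rho.
  apply: divr_gt0; first by rewrite mulr_gt0 // subr_gt0.
  by rewrite mulr_gt0.
set t := t_wf lamstar Dstar.
have Pt : 0 < t /\ t < maxlam lamstar /\ D_wf lamstar t = Dstar.
  case: (pselect (exists x, 0 < x /\ x < maxlam lamstar /\ D_wf lamstar x = Dstar)) => [ex|nex].
    exact: (xgetPex 0 (P := [set x | 0 < x /\ x < maxlam lamstar /\ D_wf lamstar x = Dstar]) ex).
  have t0 : t = 0.
    apply: xgetPN => x Px; apply: nex; by exists x.
  have := ht i ki; rewrite -/t t0 sub0r => h.
  have := l0 i; lra.
have [t0 [tmax Dt]] := Pt.
have kpos : (0 < k)%N.
  case k0: k => [|//]; exfalso.
  move: Dt; rewrite /D_wf.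
  rewrite (eq_bigr lamstar); last first.
    move=> l _; rewrite min_l //.
    have := ht l; rewrite k0 => /(_ isT) [_ h].
    by rewrite (le_trans h) // lerBlDr lerDl ltW.
  rewrite lsum mulVf ?gt_eqF // => h.
  by move: D1; rewrite -h ltxx.
pose i0 : 'I_n := Ordinal n1.
have i0k : (i0 < k)%N by [].
have hi0 := hh i0 i0k; rewrite -/t in hi0.
set P := fun l : 'I_n => (k <= l)%N.
set m := \sum_(l | P l) (1 : R).
set S := \sum_(l | P l) lamstar l.
have m1 : 1 <= m.
  by rewrite /m (bigD1 i) //= lerDl sumr_ge0.
set mu := S / m.
have Smu : mu * m = S by rewrite /mu divfK // gt_eqF // (lt_le_trans ltr01 m1).
have S0 : 0 <= S by rewrite /S sumr_ge0.
have mu0 : 0 <= mu by rewrite /mu divr_ge0 // (le_trans ler01 m1).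
have mut : mu <= t - rho.
  rewrite /mu ler_pdivrMr ?(lt_le_trans ltr01 m1) //.
  rewrite /m mulr_sumr /S; apply: ler_sum => l Pl; rewrite mulr1.
  by have [_ ->] := ht l Pl.
pose lamb l := if P l then mu else lamstar l.
have tailb : \sum_(l | P l) lamb l = S.
  rewrite (eq_bigr (fun _ => mu)); last by move=> l Pl; rewrite /lamb Pl.
  by rewrite -Smu /m mulr_sumr; apply: eq_bigr => *; rewrite mulr1.
have headb : \sum_(l | ~~ P l) lamb l = \sum_(l | ~~ P l) lamstar l.
  by apply: eq_bigr => l /negbTE hl; rewrite /lamb hl.
have sumb : \sum_l lamb l = n%:R.
  by rewrite (bigID P) /= tailb headb -lsum [RHS](bigID P).
have Lb : in_Ln lamb.
  by split => // l; rewrite /lamb; case: ifP.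
have Dwfb : D_wf lamb t = Dstar.
  rewrite -Dt /D_wf; congr (_ * _).
  rewrite (bigID P) [RHS](bigID P) /=; congr (_ + _).
    rewrite (eq_bigr lamb); last first.
      move=> l Pl; rewrite min_l // /lamb Pl (le_trans mut) // lerBlDr lerDl ltW //.
    rewrite tailb; apply: eq_bigr => l Pl; rewrite min_l //.
    have [_ h] := ht l Pl; rewrite (le_trans h) // lerBlDr lerDl ltW //.
  by apply: eq_bigr => l /negbTE hl; rewrite /lamb hl.
have tmb : t < maxlam lamb.
  apply: (lt_le_trans (y := lamb i0)).
    rewrite /lamb /P leqNgt i0k /=.
    by apply: lt_le_trans hi0; rewrite ltrDl.
  exact: le_bigmax.
have tb : t_wf lamb Dstar = t.
  rewrite /t_wf; apply: xget_unique; first by [].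
  move=> y [y0 [ym Dy]].
  case: (ltgtP y t) => // hy; exfalso.
    have := @Dwf_strict R n lamb y t n1 y0 hy tmb.
    by rewrite Dy Dwfb ltxx.
  have := @Dwf_strict R n lamb t y n1 t0 hy ym.
  by rewrite Dy Dwfb ltxx.
have Fb : in_Fk k Dstar rho lamb.
  split => //; split; rewrite tb => l hl; rewrite /lamb /P.
    by rewrite leqNgt hl /=; apply: hh.
  by rewrite hl.
have Gle := hmax lamb Fb.
have [T0 DT] := @Trc_spec R n lamstar Dstar n1 (conj l0 lsum) D0 D1.
have [Tb0 DTb] := @Trc_spec R n lamb Dstar n1 Lb D0 D1.
set T := T_rc lamstar Dstar in T0 DT.
set Tb := T_rc lamb Dstar in Tb0 DTb.
have Rwfeq : bR_wf lamb Dstar = bR_wf lamstar Dstar.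
  rewrite /bR_wf tb -/t /R_wf; congr (_ * _); apply: eq_bigr => l _.
  rewrite /lamb; case: ifP => // Pl.
  have [_ h] := ht l Pl.
  have tr : t - rho <= t by rewrite lerBlDr lerDl ltW.
  by rewrite !maxlog0 // (le_trans _ tr).
have [i1 [Pi1 ni1]] : exists i1, P i1 /\ lamstar i1 != mu.
  case: (eqVneq (lamstar i) mu) => him; last by exists i.
  by exists j; split => //; rewrite -him eq_sym.
have sumdiff : \sum_l (lamstar l - lamb l) = 0 by rewrite sumrB lsum sumb subrr.
have sumdc : forall c, \sum_l (lamstar l - lamb l) * c = 0.
  by move=> c; rewrite -mulr_suml sumdiff mul0r.
have HD : D_rc lamstar T < D_rc lamb T.
  rewrite /D_rc ltr_pM2l ?invr_gt0 //.
  apply: (lt_le_trans (y := \sum_l (lamb l / (1 + lamb l * T) + (lamstar l - lamb l) / (1 + mu * T) ^+ 2))).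
    apply: (sum_lt i1) => [l|].
      rewrite /lamb; case: ifP => Pl; first by apply: tang_g => //; exact: ltW.
      by rewrite subrr mul0r addr0.
    by rewrite /lamb Pi1; apply: tang_g_lt.
  by rewrite big_split /= (sumdc ((1 + mu * T) ^+ 2)^-1) addr0.
have HT : T < Tb.
  rewrite ltNge; apply/negP => hle.
  have : D_rc lamb T <= D_rc lamb Tb.
    rewrite /D_rc ler_pM2l ?invr_gt0 //; apply: ler_sum => l _.
    have x0 : 0 <= lamb l by case: Lb.
    have a0 : 0 < 1 + lamb l * Tb by rewrite ltr_wpDr // mulr_ge0 // ltW.
    have b0 : 0 < 1 + lamb l * T by rewrite ltr_wpDr // mulr_ge0 // ltW.
    rewrite ler_wpM2l // lef_pV2 ?posrE // lerD2l ler_wpM2l //.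
  by rewrite DTb -DT leNgt HD.
have HF1 : \sum_l log2 (1 + lamstar l * T) <= \sum_l log2 (1 + lamb l * T).
  apply: (le_trans (y := \sum_l (log2 (1 + lamb l * T) + (lamstar l - lamb l) * (T / (1 + mu * T) / ln 2)))).
    apply: ler_sum => l _.
    rewrite /lamb; case: ifP => Pl; first by apply: tang_log2' => //; exact: ltW.
    by rewrite subrr mul0r addr0.
  by rewrite big_split /= (sumdc (T / (1 + mu * T) / ln 2)) addr0.
have HF2 : \sum_l log2 (1 + lamb l * T) < \sum_l log2 (1 + lamb l * Tb).
  have lb0 : 0 < lamb i0.
    rewrite /lamb /P leqNgt i0k /=; apply: lt_le_trans hi0; exact: addr_gt0.
  apply: (sum_lt i0) => [l|].
    have x0 : 0 <= lamb l by case: Lb.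
    apply: log2_le; first by rewrite ltr_wpDr // mulr_ge0 // ltW.
    by rewrite lerD2l ler_wpM2l // ltW.
  apply: log2_lt; first by rewrite ltr_wpDr // mulr_ge0 // ltW.
  by rewrite ltrD2l ltr_pM2l.
have : Gfun lamstar Dstar < Gfun lamb Dstar.
  rewrite /Gfun Rwfeq ltrD2r /bR_rc /R_rc -/T -/Tb ltr_pM2l ?invr_gt0 ?mulr_gt0 //.
  exact: le_lt_trans HF1 HF2.
by rewrite ltNge Gle.
Qed.
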